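(* Let $\omega=(\omega_{n,s})$ be semivalue weights. Consider the two-player unanimity game $v$ on $\{A,B\}$ with $v(\{A,B\})=1$ and $v(T)=0$ for every proper subset $T$. Let provider $A$ split into $k\ge 2$ pseudonyms $A_1,\dots,A_k$, producing the $(k+1)$-player unanimity game $v'$ on $\{A_1,\dots,A_k,B\}$ ($v'(T)=1$ iff $T$ is the whole player set, else $0$). Then the additive split-gain, namely the total semivalue of the pseudonyms in $v'$ minus the semivalue of $A$ in $v$, equals \[\Gamma(\omega,k)=k\,\omega_{k+1,k}-\omega_{2,1},\] and, when $\omega_{2,1}>0$, the multiplicative split-gain (ratio of the pseudonyms' total semivalue in $v'$ to $A$'s semivalue in $v$) is $G(\omega,k)=k\,\omega_{k+1,k}/\omega_{2,1}$. In particular: for Shapley weights, $\Gamma=(k-1)/(2(k+1))>0$ for all $k\ge2$, converging to $1/2$ as $k\to\infty$; for raw Banzhaf weights, $\Gamma=k\,2^{-k}-1/2$, which is zero at $k=2$ and negative for all $k\ge3$; for Beta-Shapley the gain is obtained by substituting its weights into the general formula. Furthermore, for the $n$-player unanimity game ($v_n([n])=1$, $v_n=0$ on proper subsets) in which one player splits into $k$ pseudonyms, producing the $(n+k-1)$-player unanimity game, the Shapley multiplicative split-gain is $G_{\mathrm{Sh}}(n,k)=nk/(n+k-1)$, which is strictly greater than $1$ for all $n,k\ge2$.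
   Context: A semivalue with weights $\omega$ assigns to player $k$ in a game $w$ on $[K]$ the value $\varphi_k^\omega(w)=\sum_{Q\subseteq[K]\setminus\{k\}}\omega_{K,|Q|}\,[w(Q\cup\{k\})-w(Q)]$, where $\omega_{K,s}\ge0$ and $\sum_{s=0}^{K-1}\binom{K-1}{s}\omega_{K,s}=1$. Shapley weights are $\omega_{K,s}=1/(K\binom{K-1}{s})$; raw Banzhaf weights are $\omega_{K,s}=2^{-(K-1)}$; Beta-Shapley weights are a parametric coalition-size reweighting. *)

(* Defs.v *)
From HB Require Import structures.
From mathcomp Require Import all_boot all_order all_algebra.
From mathcomp Require Import all_classical all_reals all_analysis.
Set Implicit Arguments. Unset Strict Implicit. Unset Printing Implicit Defensive.
Import Order.TTheory GRing.Theory Num.Theory.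
Local Open Scope ring_scope.

Section Defs.
Variable R : realType.

(* omega K s = omega_{K,s}; games on K players have player set 'I_K *)
Definition semivalue_weights (omega : nat -> nat -> R) : Prop :=
  forall K : nat, (0 < K)%N ->
    (forall s : nat, (s < K)%N -> 0 <= omega K s) /\
    \sum_(s < K) ('C(K.-1, s))%:R * omega K s = 1.

Definition semivalue (omega : nat -> nat -> R) (K : nat)
  (w : {set 'I_K} -> R) (k : 'I_K) : R :=
  \sum_(Q : {set 'I_K} | k \notin Q) omega K #|Q| * (w (k |: Q) - w Q).

Definition unanimity (K : nat) : {set 'I_K} -> R :=
  fun T => if T == [set: 'I_K] then 1 else 0.

Definition shapley_weights : nat -> nat -> R :=
  fun K s => (K%:R * ('C(K.-1, s))%:R)^-1.

Definition banzhaf_weights : nat -> nat -> R :=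
  fun K s => (2 ^+ K.-1)^-1.

(* One player of the n-player unanimity game splits into k pseudonyms,
   giving the (n+k-1)-player unanimity game; the pseudonyms are the
   players 0, ..., k-1 of 'I_(n+k-1). *)
Definition pseudonyms_total (omega : nat -> nat -> R) (n k : nat) : R :=
  \sum_(i : 'I_((n + k - 1)%N) | (i < k)%N) semivalue omega (@unanimity (n + k - 1)%N) i.

Definition split_gain_add (omega : nat -> nat -> R) (n k : nat) (a : 'I_n) : R :=
  pseudonyms_total omega n k - semivalue omega (@unanimity n) a.

Definition split_gain_mult (omega : nat -> nat -> R) (n k : nat) (a : 'I_n) : R :=
  pseudonyms_total omega n k / semivalue omega (@unanimity n) a.

End Defs.

Arguments semivalue {R} omega K w k.
Arguments unanimity {R} K _.
Arguments pseudonyms_total {R} omega n k.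
Arguments split_gain_add {R} omega n k a.
Arguments split_gain_mult {R} omega n k a.

(* Main.v *)
Require Import Defs.
From HB Require Import structures.
From mathcomp Require Import all_boot all_order all_algebra.
From mathcomp Require Import all_classical all_reals all_analysis.
From mathcomp Require Import zify.
From mathcomp.algebra_tactics Require Import ring lra.
Import Order.TTheory GRing.Theory Num.Theory numFieldNormedType.Exports.
Local Open Scope ring_scope.

Lemma sv_unan (R : realType) (omega : nat -> nat -> R) K (k : 'I_K) :
  semivalue omega K (unanimity K) k = omega K K.-1.
Proof.
rewrite /semivalue (bigD1 [set~ k]) /=; last by rewrite !inE eqxx.
rewrite big1 ?addr0.
  rewrite /unanimity cardsC1 card_ord.
  have -> : (k |: [set~ k]) == [set: 'I_K] by rewrite finset.setUCr.
  have -> : ([set~ k] == [set: 'I_K]) = false.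
    apply/negbTE/eqP => /setP /(_ k); by rewrite !inE eqxx.
  by rewrite subr0 mulr1.
move=> Q /andP [kQ QD]; rewrite /unanimity.
have -> : (Q == [set: 'I_K]) = false.
  by apply/negbTE/eqP => QT; move: kQ; rewrite QT inE.
have -> : (k |: Q == [set: 'I_K]) = false.
  apply/negbTE/eqP => QT; move/eqP: QD; apply; apply/setP => x.
  move/setP: QT => /(_ x); rewrite !inE; case: eqP => [->|_] //=.
  by move=> _; apply/negbTE.
by rewrite subrr mulr0.
Qed.

Lemma pt_unan (R : realType) (omega : nat -> nat -> R) n k : (1 <= n)%N ->
  pseudonyms_total omega n k = k%:R * omega (n + k - 1)%N (n + k - 1).-1.
Proof.
move=> n1; rewrite /pseudonyms_total.
rewrite (eq_bigr (fun _ => omega (n + k - 1)%N (n + k - 1).-1)); last by move=> i _; rewrite sv_unan.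
rewrite -(big_ord_widen (n + k - 1)%N (fun _ => omega (n + k - 1)%N (n + k - 1).-1)); last by lia.
by rewrite sumr_const card_ord mulr_natl.
Qed.

Lemma gain2 (R : realType) (omega : nat -> nat -> R) k :
  split_gain_add omega 2 k ord0 = k%:R * omega (k + 1)%N k - omega 2%N 1%N.
Proof.
rewrite /split_gain_add pt_unan // sv_unan.
have e : (2 + k - 1 = k + 1)%N by lia. rewrite e addn1 /=. by [].
Qed.

Lemma mult2 (R : realType) (omega : nat -> nat -> R) k :
  split_gain_mult omega 2 k ord0 = k%:R * omega (k + 1)%N k / omega 2%N 1%N.
Proof.
rewrite /split_gain_mult pt_unan // sv_unan.
have e : (2 + k - 1 = k + 1)%N by lia. rewrite e addn1 /=. by [].
Qed.

Lemma shap2 (R : realType) k :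
  split_gain_add (@shapley_weights R) 2 k ord0 = 2^-1 - harmonic k.
Proof.
rewrite gain2 /shapley_weights /= addn1 /= !binn !mulr1.
rewrite -natr1 /=.
have h : (k%:R + 1 : R) != 0 by rewrite natr1 pnatr_eq0.
field; by rewrite h.
Qed.

Lemma shapK (R : realType) K : (0 < K)%N -> @shapley_weights R K K.-1 = K%:R^-1.
Proof. by move=> _; rewrite /shapley_weights binn mulr1. Qed.

Lemma pow2gt (k : nat) : (3 <= k)%N -> (2 * k < 2 ^ k)%N.
Proof.
elim: k => [|k IH] //; rewrite leq_eqVlt => /orP [/eqP <- //|]; rewrite ltnS => k3; have h := IH k3.
rewrite expnS; move: h k3; set x := (2 ^ k)%N; lia.
Qed.

Local Open Scope classical_set_scope.

Theorem proposition1 (R : realType) :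
  (* general two-player formula; A = player 0 of 'I_2 *)
  (forall (omega : nat -> nat -> R) (k : nat),
     semivalue_weights omega -> (2 <= k)%N ->
     split_gain_add omega 2 k ord0 = k%:R * omega (k + 1)%N k - omega 2%N 1%N /\
     (0 < omega 2%N 1%N ->
        split_gain_mult omega 2 k ord0 = k%:R * omega (k + 1)%N k / omega 2%N 1%N)) /\
  (* Shapley *)
  (forall k : nat, (2 <= k)%N ->
     split_gain_add (@shapley_weights R) 2 k ord0 = (k%:R - 1) / (2 * (k%:R + 1)) /\
     0 < split_gain_add (@shapley_weights R) 2 k ord0) /\
  ((fun k : nat => split_gain_add (@shapley_weights R) 2 k ord0) @ \oo --> (1 / 2 : R)) /\
  (* raw Banzhaf *)
  (forall k : nat, (2 <= k)%N ->
     split_gain_add (@banzhaf_weights R) 2 k ord0 = k%:R / 2 ^+ k - 1 / 2) /\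
  split_gain_add (@banzhaf_weights R) 2 2 ord0 = 0 /\
  (forall k : nat, (3 <= k)%N -> split_gain_add (@banzhaf_weights R) 2 k ord0 < 0) /\
  (* n-player unanimity game, Shapley multiplicative gain *)
  (forall (n k : nat) (a : 'I_n), (2 <= n)%N -> (2 <= k)%N ->
     split_gain_mult (@shapley_weights R) n k a = (n * k)%:R / (n + k - 1)%:R /\
     1 < split_gain_mult (@shapley_weights R) n k a).
Proof.
have bz : forall k, split_gain_add (@banzhaf_weights R) 2 k ord0 = k%:R / 2 ^+ k - 1 / 2.
  by move=> k; rewrite gain2 /banzhaf_weights addn1 /= mul1r.
split.
  by move=> omega k _ _; split => [|_]; [exact: gain2|exact: mult2].
split.
  move=> k k2; rewrite shap2 /=.
  have hk : (2%:R <= k%:R :> R) by rewrite ler_nat.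
  have h : (k%:R + 1 : R) != 0 by rewrite natr1 pnatr_eq0.
  split.
    rewrite -natr1; field. by rewrite h.
  rewrite -natr1 subr_gt0 ltf_pV2 ?posrE; try lra.
split.
  have -> : (fun k : nat => split_gain_add (@shapley_weights R) 2 k ord0)
           = (fun k => 2^-1 - harmonic k).
    by apply: funext => k; rewrite shap2.
  rewrite mul1r.
  have H := cvgB (cvg_cst (2^-1 : R)) (@cvg_harmonic R).
  rewrite subr0 in H; exact: H.
split; first by move=> k _; exact: bz.
split; first by rewrite bz expr2; field.
split.
  move=> k k3; rewrite bz subr_lt0.
  have h := @pow2gt k k3.
  have h' : (2 * k%:R < 2 ^+ k :> R).
    have := h; rewrite -(ltr_nat R) natrM natrX. done.
  have x0 : (0 < 2 ^+ k :> R) by rewrite exprn_gt0.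
  rewrite ltr_pdivrMr //; lra.
move=> n k a n2 k2.
have e : split_gain_mult (@shapley_weights R) n k a = (n * k)%:R / (n + k - 1)%:R.
  rewrite /split_gain_mult pt_unan; last by lia.
  rewrite sv_unan !shapK; try lia.
  rewrite natrM; field.
  apply/andP; split; rewrite pnatr_eq0; lia.
split => //.
have h1 : (2 * k <= n * k)%N by rewrite leq_mul2r n2 orbT.
have h2 : (n * 2 <= n * k)%N by rewrite leq_mul2l k2 orbT.
rewrite e ltr_pdivlMr ?mul1r ?ltr_nat ?ltr0n; move: h1 h2; set m := (n * k)%N; lia.
Qed.
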